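(* Let $G$ be a finite simple graph with $n=|V(G)|$, and let $v_1,\dots,v_r$ be a $\beta$-sequence in $G$ which is not contained in any $(r+1)$-clique of $G$. Then $r\ge W(G)$.
   Context: Graphs are finite, undirected, without loops or multiple edges; $N(v)$ is the set of vertices adjacent to $v$, $d(v)=|N(v)|$, and $N(v_1,\dots,v_k)=\bigcap_{j=1}^k N(v_j)$. A $p$-clique is a set of $p$ pairwise adjacent vertices. Define $W(G)=\sum_{v\in V(G)}\frac{1}{n-d(v)}$. A sequence $v_1,\dots,v_r$ of vertices is a $\beta$-sequence in $G$ if (i) $d(v_1)=\max\{d(v)\mid v\in V(G)\}$, and (ii) for $2\le i\le r$, $v_i\in N(v_1,\dots,v_{i-1})$ and $d(v_i)=\max\{d(v)\mid v\in N(v_1,\dots,v_{i-1})\}$ (degrees taken in $G$). *)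

(* Defs.v *)
From mathcomp Require Import all_boot all_order all_algebra.
Set Implicit Arguments. Unset Strict Implicit. Unset Printing Implicit Defensive.
Import Order.TTheory GRing.Theory Num.Theory.

Section Graphs.
Variable T : finType.
Variable e : rel T.

Definition simple_graph : Prop := irreflexive e /\ symmetric e.

Definition nbhd (v : T) : {set T} := [set u | e v u].
Definition deg (v : T) : nat := #|nbhd v|.
Definition common_nbhd (s : seq T) : {set T} := [set u | all (fun v => e v u) s].

Definition W : rat := \sum_(v : T) 1 / ((#|T| - deg v)%N)%:R.

Definition is_clique (K : {set T}) : Prop :=
  forall x y, x \in K -> y \in K -> x != y -> e x y.

Definition beta_sequence (s : seq T) : Prop :=
  match s with
  | [::] => False
  | v1 :: _ =>
      (forall u : T, deg u <= deg v1) /\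
      (forall i, 0 < i < size s ->
         forall x0 : T,
         let vi := nth x0 s i in
         let Ni := common_nbhd (take i s) in
         vi \in Ni /\ (forall u, u \in Ni -> deg u <= deg vi))
  end.

Definition not_in_larger_clique (s : seq T) : Prop :=
  ~ exists K : {set T}, [/\ is_clique K, #|K| = (size s).+1 & [set x in s] \subset K].

End Graphs.

(* Main.v *)
Require Import Defs.
From mathcomp Require Import all_boot all_order all_algebra.
Import Order.TTheory GRing.Theory Num.Theory.
Local Open Scope ring_scope.

Section Pf.
Variables (T : finType) (e : rel T) (s : seq T) (x0 : T).
Hypothesis irr : irreflexive e.
Hypothesis sym : symmetric e.

Hypothesis hd : forall u, (deg e u <= deg e (nth x0 s 0))%N.
Hypothesis hb : forall i, (0 < i < size s)%N ->
  nth x0 s i \in common_nbhd e (take i s) /\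
  (forall u, u \in common_nbhd e (take i s) -> (deg e u <= deg e (nth x0 s i))%N).
Hypothesis ncl : not_in_larger_clique e s.

Let N i := common_nbhd e (take i s).
Let f (v : T) : rat := 1 / ((#|T| - deg e v)%N)%:R.

Lemma N_spec i u : (i < size s)%N -> u \in N i -> (deg e u <= deg e (nth x0 s i))%N.
Proof.
case: i => [|i] hi hu; first exact: hd.
exact: ((hb i.+1 hi).2 u hu).
Qed.

Lemma N_succ i : (i < size s)%N -> N i.+1 = N i :&: nbhd e (nth x0 s i).
Proof.
move=> hi; apply/setP=> u; rewrite /N /common_nbhd /nbhd !inE (take_nth x0 hi).
by rewrite all_rcons andbC.
Qed.

Lemma adj i j : (i < j < size s)%N -> e (nth x0 s i) (nth x0 s j).
Proof.
case/andP=> hij hj.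
have [h _] := hb j ltac:(by rewrite hj (leq_ltn_trans (leq0n i) hij)).
move: h; rewrite /common_nbhd inE => /allP; apply.
rewrite -(nth_take x0 hij); apply: mem_nth; by rewrite size_take hj.
Qed.

Lemma uniq_s : uniq s.
Proof.
apply/(uniqP x0) => i j; rewrite !inE /= => hi hj eqij.
case: (ltngtP i j) => // h.
  by have := adj i j; rewrite h hj eqij irr; move/(_ isT).
by have := adj j i; rewrite h hi eqij irr; move/(_ isT).
Qed.

Lemma N_last : N (size s) = set0.
Proof.
apply/setP => u; rewrite in_set0; apply/negP => hu.
move: hu; rewrite /N take_size /common_nbhd inE => hu.
apply: ncl; exists (u |: [set x in s]); split.
- move=> x y; rewrite !inE => /predU1P [->|xs] /predU1P [->|ys] nxy.
  + by rewrite eqxx in nxy.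
  + by rewrite sym; exact: (allP hu).
  + exact: (allP hu).
  + move: nxy; case/(nthP x0): xs => i hi <-; case/(nthP x0): ys => j hj <- nxy.
    case: (ltngtP i j) => h.
    * by apply: adj; rewrite h hj.
    * by rewrite sym; apply: adj; rewrite h hi.
    * by rewrite h eqxx in nxy.
- rewrite cardsU1 cardsE (card_uniqP uniq_s).
  have -> : u \notin [set x in s].
    rewrite inE; apply/negP => us; have := allP hu u us; by rewrite irr.
  by rewrite add1n.
- exact: subsetUr.
Qed.

Lemma part k : (k < size s)%N -> \sum_(v in N k :\: N k.+1) f v <= 1.
Proof.
move=> hk.
set D := N k :\: N k.+1.
set m := (#|T| - deg e (nth x0 s k))%N.
have hDsub : D \subset ~: nbhd e (nth x0 s k).
  apply/subsetP => v; rewrite /D (N_succ k hk) !inE.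
  by case: (all _ _); case: (e _ v).
have hD : (#|D| <= m)%N.
  apply: (leq_trans (subset_leq_card hDsub)).
  by rewrite /m /deg -(cardsC (nbhd e (nth x0 s k))) addKn.
case: (posnP #|D|) => hD0.
  by rewrite (cards0_eq hD0) big_set0 ler01.
have mpos : (0 < m)%N by apply: leq_trans hD.
apply: (le_trans (y := \sum_(v in D) 1 / m%:R)).
  apply: ler_sum => v vD.
  have hv : (deg e v <= deg e (nth x0 s k))%N.
    by apply: N_spec => //; move: vD; rewrite /D inE => /andP[].
  have hm : (m <= #|T| - deg e v)%N by rewrite /m leq_sub2l.
  rewrite /f !div1r lef_pV2 ?ler_nat // posrE ltr0n //.
  exact: leq_trans hm.
rewrite sumr_const div1r -[_ *+ #|D|]mulr_natr mulrC ler_pdivrMr ?ltr0n // mul1r ler_nat //.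
Qed.

Lemma cum k : (k <= size s)%N -> \sum_(v in ~: N k) f v <= k%:R.
Proof.
elim: k => [|k IH] hk.
  have -> : N 0 = setT by apply/setP => u; rewrite /N take0 /common_nbhd !inE.
  by rewrite setCT big_set0.
rewrite (bigID (mem (N k))) /=.
have -> : \sum_(v in ~: N k.+1 | v \in N k) f v = \sum_(v in N k :\: N k.+1) f v.
  by apply: eq_bigl => v; rewrite !inE andbC.
have -> : \sum_(v in ~: N k.+1 | v \notin N k) f v = \sum_(v in ~: N k) f v.
  apply: eq_bigl => v; rewrite (N_succ k hk) !inE.
  by apply/idP/idP => [/andP[]//|h]; rewrite negb_and h.
have -> : (k.+1)%:R = k%:R + 1 :> rat by rewrite -natr1.
rewrite addrC lerD //; first by apply: IH; exact: ltnW.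
exact: (part k hk).
Qed.

Lemma final : W e <= (size s)%:R.
Proof.
have := cum (size s) (leqnn (size s)); rewrite N_last setC0.
rewrite /W; congr (_ <= _); apply: eq_bigl => v; by rewrite inE.
Qed.

End Pf.

Theorem mainTheorem5 (T : finType) (e : rel T) (s : seq T) :
  simple_graph e -> beta_sequence e s -> not_in_larger_clique e s ->
  W e <= (size s)%:R.
Proof.
case=> irr sym; case: s => [|v1 s'] //.
move=> [hd hb] ncl.
apply: (@final T e (v1 :: s') v1 irr sym hd _ ncl).
move=> i hi; exact: (hb i hi v1).
Qed.
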